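(* Let $M=p_i^{n_i}p_j^{n_j}p_k^{n_k}$ with distinct primes and $n_i,n_j,n_k\in\mathbb{N}$, let $A\oplus B=\mathbb{Z}_M$ with $\Phi_M(X)\mid A(X)$, assume $A$ is fibered on $D$-grids where $D=M/(p_ip_jp_k)$, and let $\Lambda=\Lambda(z_0,D)$ for some $z_0\in\mathbb{Z}_M$. Let $z_\nu=z_0+\nu M/p_k$ for $\nu=0,\dots,p_k-1$. Assume that $\kappa(a)\in\{i,j\}$ for all $a\in\Sigma_A(\Lambda)$, and that for each $\nu$ there is $\lambda(\nu)\in\{i,j\}$ with $\kappa(a)=\lambda(\nu)$ for all $a\in\Sigma_A(z_\nu*F_i*F_j)$. Assume further that for each $\lambda\in\{i,j\}$, $$\#\{\nu\in\{0,1,\dots,p_k-1\}:\lambda(\nu)=\lambda\}\ge2.$$ Then all fibers $z*F_k$ with $z\in\Lambda$ split with the same parity: either all with parity $(A,B)$ or all with parity $(B,A)$.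
   Context: $A\oplus B=\mathbb{Z}_M$ means every element of $\mathbb{Z}_M$ is uniquely $a+b$, $a\in A$, $b\in B$; $A(X)=\sum_{a\in A}X^a$ ($A$ in $\{0,\dots,M-1\}$), $\Phi_M$ the $M$-th cyclotomic polynomial. For $d\mid M$, $\Lambda(x,d)=\{x'\in\mathbb{Z}_M:d\mid x-x'\}$. For $\nu\in\{i,j,k\}$, $F_\nu=\{0,M/p_\nu,\dots,(p_\nu-1)M/p_\nu\}$; $x*Y=\{x+y:y\in Y\}$, $X*Y=\{x+y:x\in X,y\in Y\}$. A set $Y$ is fibered in the $p_\nu$ direction if it is a union of sets $y*F_\nu$, $y\in Y$. ''$A$ is fibered on $D$-grids'' means for every $a\in A$, $A\cap\Lambda(a,D)$ is fibered in some direction $p_\nu$. The function $\kappa:A\to\{i,j,k\}$: for each $D$-grid $\Lambda(x,D)$ meeting $A$, fix one direction $\nu(x)$ in which $A\cap\Lambda(x,D)$ is fibered (chosen arbitrarily if several) and set $\kappa(a)=\nu(x)$ for $a\in A\cap\Lambda(x,D)$. For $Z\subset\mathbb{Z}_M$, $\Sigma_A(Z)=\{a\in A:a+b\in Z\text{ for some }b\in B\}$, $\Sigma_B(Z)=\{b\in B:a+b\in Z\text{ for some }a\in A\}$. A fiber $Z=z*F_k$ splits with parity $(A,B)$ if $p_k^{n_k}\mid a-a'$ for all $a,a'\in\Sigma_A(Z)$ and, for distinct $b,b'\in\Sigma_B(Z)$, $p_k^{n_k-1}\mid b-b'$ but $p_k^{n_k}\nmid b-b'$; parity $(B,A)$ is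 defined with $A,B$ interchanged. *)

(* Defs.v *)
From HB Require Import structures.
From mathcomp Require Import all_boot all_order all_algebra all_field.
Set Implicit Arguments. Unset Strict Implicit. Unset Printing Implicit Defensive.
Import GRing.Theory.
Local Open Scope ring_scope.

Inductive dir := Di | Dj | Dk.
Definition dir_eqb (x y : dir) : bool :=
  match x, y with Di, Di | Dj, Dj | Dk, Dk => true | _, _ => false end.
Lemma dir_eqP : Equality.axiom dir_eqb.
Proof. by case; case; constructor. Qed.
HB.instance Definition _ := hasDecEq.Build dir dir_eqP.

Definition pof (pi pj pk : nat) (d : dir) : nat :=
  match d with Di => pi | Dj => pj | Dk => pk end.

(* Z_M is 'Z_M (we always have M >= 2 below). *)

Definition tiling (M : nat) (A B : {set 'Z_M}) : Prop :=
  (forall x : 'Z_M, exists a, exists b, [/\ a \in A, b \in B & a + b = x]) /\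
  (forall a b a' b' : 'Z_M, a \in A -> b \in B -> a' \in A -> b' \in B ->
     a + b = a' + b' -> a = a' /\ b = b').

Definition maskpoly (M : nat) (A : {set 'Z_M}) : {poly int} :=
  \sum_(a in A) 'X^(nat_of_ord a).

Definition grid (M : nat) (x : 'Z_M) (d : nat) : {set 'Z_M} :=
  [set x' : 'Z_M | (d %| nat_of_ord (x - x')%R)%N].

Definition fib (M p : nat) : {set 'Z_M} :=
  [set ((t * (M %/ p))%N%:R : 'Z_M) | t : 'I_p].

Definition shift (M : nat) (x : 'Z_M) (Y : {set 'Z_M}) : {set 'Z_M} :=
  [set x + y | y in Y].

Definition sumset (M : nat) (X Y : {set 'Z_M}) : {set 'Z_M} :=
  [set x + y | x in X, y in Y].

Definition fibered (M : nat) (Y : {set 'Z_M}) (p : nat) : Prop :=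
  Y = \bigcup_(y in Y) shift y (fib M p).

(* Sigma_X(Z) relative to the tiling partner Y: {x in X : x + y in Z for some y in Y}.
   Sigma_A(Z) = Sigma A B Z, Sigma_B(Z) = Sigma B A Z. *)
Definition Sigma (M : nat) (X Y Z : {set 'Z_M}) : {set 'Z_M} :=
  [set x in X | [exists y in Y, x + y \in Z]].

Definition splits_parity (M : nat) (X Y Z : {set 'Z_M}) (p n : nat) : Prop :=
  (forall x x', x \in Sigma X Y Z -> x' \in Sigma X Y Z ->
     (p ^ n %| nat_of_ord (x - x')%R)%N) /\
  (forall y y', y \in Sigma Y X Z -> y' \in Sigma Y X Z -> y != y' ->
     (p ^ n.-1 %| nat_of_ord (y - y')%R)%N /\ ~~ (p ^ n %| nat_of_ord (y - y')%R)%N).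

(* Main.v *)
Require Import Defs.
From HB Require Import structures.
From mathcomp Require Import all_boot all_order all_algebra all_field.
From mathcomp Require Import ring zify.
From Stdlib Require Import Classical.
Import GRing.Theory.
Local Open Scope ring_scope.

Section Tij.
Variable m : nat.
Hypothesis m_gt1 : (1 < m)%N.
Variable p : nat.
Hypothesis p_pr : prime p.
Local Notation n := (Zp_trunc m).+2.
Local Notation K := 'F_p.

Definition Tm (y : 'Z_m) : 'M[K]_n := \matrix_(i, j) ((j == i + y)%:R).

Lemma TmM y z : Tm y * Tm z = Tm (y + z).
Proof.
apply/matrixP => i j; rewrite !mxE (bigD1 (i + y)) //= !mxE eqxx mul1r big1 ?addr0.
  by rewrite addrA.
by move=> k /negPf hk; rewrite !mxE hk mul0r.
Qed.

Lemma TmX y k : Tm y ^+ k = Tm (y *+ k).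
Proof.
elim: k => [|k IH].
  by rewrite expr0 mulr0n; apply/matrixP => i j; rewrite !mxE addr0 eq_sym.
by rewrite exprS IH TmM mulrS.
Qed.

Lemma Tm_comm y z : GRing.comm (Tm y) (Tm z).
Proof. by rewrite /GRing.comm !TmM addrC. Qed.

Lemma pchar_M : p \in [pchar 'M[K]_n].
Proof. by rewrite (pchar_lalg 'M[K]_n) pchar_Fp. Qed.

Lemma Tm_frob (s : seq 'Z_m) (P : pred 'Z_m) :
  (\sum_(a <- s | P a) Tm a) ^+ p = \sum_(a <- s | P a) Tm (a *+ p).
Proof.
elim: s => [|x s IH].
  by rewrite !big_nil expr0n; case: p p_pr => [|?].
rewrite !big_cons; case: (P x) => //.
rewrite -(pFrobenius_autE pchar_M) pFrobenius_autD_comm; last first.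
  by apply: commr_sum => a _; apply: Tm_comm.
by rewrite !pFrobenius_autE IH TmX.
Qed.

Definition Jm : 'M[K]_n := const_mx 1.

Lemma TmJ y : Tm y * Jm = Jm.
Proof.
apply/matrixP => i j; rewrite !mxE (bigD1 (i + y)) //= !mxE eqxx mul1r big1 ?addr0 //.
by move=> k /negPf hk; rewrite !mxE hk mul0r.
Qed.

Lemma sumTm_entry (P : pred ('Z_m * 'Z_m)) (F : 'Z_m * 'Z_m -> 'Z_m) i j :
  (\sum_(u | P u) Tm (F u)) i j = (#|[set u | P u && (j == i + F u)]|)%:R.
Proof.
rewrite summxE; under eq_bigr do rewrite mxE.
rewrite -sum1_card -natr_sum; congr (_ %:R).
rewrite big_mkcond [RHS]big_mkcond /=; apply: eq_bigr => u _.
by rewrite inE; case: (P u); case: (j == _).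
Qed.

Lemma mxMn_entry (A : 'M[K]_n) k i j : (A *+ k) i j = A i j *+ k.
Proof. by elim: k => [|k IH]; rewrite ?mulr0n ?mxE // !mulrS mxE IH. Qed.

Lemma tiling_card (A B : {set 'Z_m}) : tiling A B -> (#|A| * #|B|)%N = m.
Proof.
move=> [ex un].
have inj : {in setX A B &, injective (fun u : 'Z_m * 'Z_m => u.1 + u.2)}.
  move=> [a b] [a' b'] /setXP [ha hb] /setXP [ha' hb'] /= h.
  by have [-> ->] := un _ _ _ _ ha hb ha' hb' h.
rewrite -cardsX -(card_in_imset inj).
have -> : [set u.1 + u.2 | u in setX A B] = setT.
  apply/setP => x; rewrite inE; have [a [b [ha hb e]]] := ex x.
  by apply/imsetP; exists (a, b) => //; apply/setXP.
by rewrite cardsT card_ord Zp_cast.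
Qed.

Lemma tij (A B : {set 'Z_m}) : tiling A B -> ~~ (p %| #|A|)%N ->
  tiling [set a *+ p | a in A] B.
Proof.
move=> hT hpA; have [ex un] := hT.
pose SA := \sum_(a in A) Tm a.
pose SB := \sum_(b in B) Tm b.
pose N := fun x : 'Z_m => #|[set u : 'Z_m * 'Z_m | ((u.1 \in A) && (u.2 \in B)) && (x == 0 + (u.1 *+ p + u.2))]|.
have pairS : forall f : 'Z_m -> 'Z_m, (\sum_(a in A) Tm (f a)) * SB =
    \sum_(u | (u.1 \in A) && (u.2 \in B)) Tm (f u.1 + u.2).
  move=> f; rewrite mulr_suml; under eq_bigr do rewrite mulr_sumr.
  rewrite pair_big; apply: eq_bigr => u _; exact: TmM.
have E1 : SA * SB = Jm.
  rewrite (pairS id); apply/matrixP => i j; rewrite sumTm_entry [RHS]mxE.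
  have [a0 [b0 [ha0 hb0 e0]]] := ex (j - i).
  suff -> : [set u : 'Z_m * 'Z_m | ((u.1 \in A) && (u.2 \in B)) && (j == i + (u.1 + u.2))] = [set (a0, b0)].
    by rewrite cards1.
  apply/setP => [[a b]]; rewrite !inE /= xpair_eqE.
  apply/idP/idP.
    move=> /andP [/andP [ha hb] /eqP e].
    have e' : a + b = a0 + b0 by rewrite e0 e (addrC i) addrK.
    by have [-> ->] := un _ _ _ _ ha hb ha0 hb0 e'; rewrite !eqxx.
  move=> /andP [/eqP -> /eqP ->]; rewrite ha0 hb0 e0 /=.
  by rewrite addrC subrK.
have EJ : SA * Jm = Jm *+ #|A|.
  by rewrite mulr_suml; under eq_bigr do rewrite TmJ; rewrite sumr_const.
have EJk : forall k, SA ^+ k * Jm = Jm *+ (#|A| ^ k).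
  elim=> [|k IH]; first by rewrite expr0 mul1r expn0.
  by rewrite exprSr -mulrA EJ mulrnAr IH -mulrnA expnSr.
have E3 : SA ^+ p * SB = Jm *+ (#|A| ^ p.-1).
  have hp : SA ^+ p = SA ^+ p.-1 * SA by rewrite -exprSr prednK // prime_gt0.
  by rewrite hp -mulrA E1 EJk.
have E4 : SA ^+ p = \sum_(a in A) Tm (a *+ p) by rewrite /SA Tm_frob.
have Nmod : forall x, (N x)%:R = (#|A| ^ p.-1)%:R :> K.
  move=> x; have := congr1 (fun M : 'M[K]_n => M 0 x) E3.
  rewrite /= E4 pairS sumTm_entry mxMn_entry mxE => ->.
  by [].
have Npos : forall x, (0 < N x)%N.
  move=> x; rewrite lt0n; apply/negP => /eqP h0.
  have := congr1 (fun z : K => nat_of_ord z) (Nmod x); rewrite /= !val_Fp_nat // h0 mod0n => /esym/eqP.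
  rewrite -/(dvdn p _) Euclid_dvdX // => /andP [hp _].
  by rewrite hp in hpA.
have Nsum : (\sum_x N x)%N = (#|A| * #|B|)%N.
  rewrite -cardsX -sum1_card (partition_big (fun u : 'Z_m * 'Z_m => u.1 *+ p + u.2) xpredT) //=.
  apply: eq_bigr => x _; rewrite sum1_card; apply: eq_card => u.
  by rewrite !inE add0r eq_sym; rewrite unfold_in /=; case: u => a b; rewrite in_setX.
have N1 : forall x, N x = 1%N.
  have : (\sum_x (N x - 1) == 0)%N.
    rewrite sumnB; last by move=> x _; exact: Npos.
    by rewrite Nsum (tiling_card _ _ hT) sum1_card card_ord Zp_cast // subnn.
  rewrite sum_nat_eq0 => /forallP h x.
  have := h x; rewrite /= subn_eq0 => h1.
  by apply/eqP; rewrite eqn_leq h1 Npos.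
split.
  move=> x; have /eqP := N1 x; case/cards1P => [[a b]] hs.
  have : (a, b) \in [set (a, b)] by rewrite inE.
  rewrite -hs inE /= => /andP [/andP [ha hb] /eqP e].
  exists (a *+ p), b; split => //; first by apply/imsetP; exists a.
  by rewrite e add0r.
move=> a1 b1 a2 b2 /imsetP [x1 hx1 ->] hb1 /imsetP [x2 hx2 ->] hb2 e.
have /eqP := N1 (x1 *+ p + b1); case/cards1P => [[a b]] hs.
have h1 : (x1, b1) \in [set (a, b)].
  by rewrite -hs inE /= hx1 hb1 add0r eqxx.
have h2 : (x2, b2) \in [set (a, b)].
  by rewrite -hs inE /= hx2 hb2 add0r e eqxx.
move: h1 h2; rewrite !inE !xpair_eqE => /andP [/eqP -> /eqP ->] /andP [/eqP -> /eqP ->].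
by [].
Qed.

End Tij.

Section TijR.
Variable m : nat.
Hypothesis m_gt1 : (1 < m)%N.

Lemma tij_r (A B : {set 'Z_m}) r : tiling A B -> coprime r m ->
  tiling [set a *+ r | a in A] B.
Proof.
move=> hT; elim: r {-2}r (leqnn r) => [|k IH] r hr hc.
  move: hr; rewrite leqn0 => /eqP hr0; move: hc; rewrite hr0 /coprime gcd0n.
  by move=> /eqP hm; exfalso; move: m_gt1; rewrite hm.
case: (leqP r 1) => hr1.
  case: r hr hc hr1 => [|[|r']] // _ hc _.
    by move: hc; rewrite /coprime gcd0n => /eqP hm; exfalso; move: m_gt1; rewrite hm.
  suff -> : [set a *+ 1 | a in A] = A by [].
  by apply/setP => x; apply/imsetP/idP => [[y hy ->]|hx]; [rewrite mulr1n | exists x].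
have pp := pdiv_prime hr1.
have pd := pdiv_dvd r.
set q := pdiv r in pp pd *.
have hr' : r = (r %/ q * q)%N by rewrite divnK.
have hq : (r %/ q <= k)%N.
  rewrite -ltnS; apply: leq_trans hr; rewrite ltn_Pdiv // ?prime_gt1 //.
  by apply: leq_trans hr1.
have hc' : coprime (r %/ q) m by apply: coprime_dvdl hc; apply: dvdn_div.
have hT' := IH _ hq hc'.
have hqA : ~~ (q %| #|[set a *+ (r %/ q) | a in A]|)%N.
  apply/negP => hd.
  have hdm : (q %| m)%N.
    by rewrite -(tiling_card _ m_gt1 _ _ hT'); apply: dvdn_mulr.
  have : (q %| gcdn r m)%N by rewrite dvdn_gcd pd hdm.
  by move: hc; rewrite /coprime => /eqP ->; rewrite dvdn1 => /eqP hq1; rewrite hq1 in pp.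
have := tij _ m_gt1 _ pp _ _ hT' hqA.
suff -> : [set x *+ q | x in [set a *+ (r %/ q) | a in A]] = [set a *+ r | a in A] by [].
rewrite -imset_comp; apply: eq_imset => a /=.
by rewrite -mulrnA -hr'.
Qed.

Lemma no_unit_shift (A B : {set 'Z_m}) r a a' b b' : tiling A B -> coprime r m ->
  a \in A -> a' \in A -> b \in B -> b' \in B ->
  a *+ r + b = a' *+ r + b' -> a = a'.
Proof.
move=> hT hc ha ha' hb hb' e.
have [_ un] := tij_r _ _ _ hT hc.
have hA : a *+ r \in [set x *+ r | x in A] by apply/imsetP; exists a.
have hA' : a' *+ r \in [set x *+ r | x in A] by apply/imsetP; exists a'.
have [e1 _] := un _ _ _ _ hA hb hA' hb' e.
have hu : (r%:R : 'Z_m) \is a GRing.unit by rewrite unitZpE // coprime_sym.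
move: e1; rewrite -(mulr_natr a) -(mulr_natr a') => e1.
by rewrite -(mulrK hu a) e1 mulrK.
Qed.

End TijR.

Section ZHelp.
Variable M : nat.
Hypothesis M_gt1 : (1 < M)%N.

Lemma dvZ_nat d k : (d %| M)%N -> (d %| nat_of_ord (k%:R : 'Z_M))%N = (d %| k)%N.
Proof.
move=> hd; rewrite val_Zp_nat //.
by rewrite {2}(divn_eq k M) dvdn_addr // dvdn_mull.
Qed.

Lemma dvZ_addr d (x y : 'Z_M) : (d %| M)%N -> (d %| x)%N ->
  (d %| nat_of_ord (x + y)%R)%N = (d %| y)%N.
Proof.
move=> hd hx; rewrite -[x]natr_Zp -[y]natr_Zp -natrD dvZ_nat //.
by rewrite dvdn_addr // natr_Zp.
Qed.

Lemma dvZ_add d (x y : 'Z_M) : (d %| M)%N -> (d %| x)%N -> (d %| y)%N ->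
  (d %| nat_of_ord (x + y)%R)%N.
Proof. by move=> hd hx hy; rewrite dvZ_addr. Qed.

Lemma dvZ_opp d (x : 'Z_M) : (d %| M)%N -> (d %| nat_of_ord (- x)%R)%N = (d %| x)%N.
Proof.
move=> hd; apply/idP/idP => h.
  by have := @dvZ_addr d (- x) x hd h; rewrite addNr /= dvdn0 => <-.
by have := @dvZ_addr d x (- x) hd h; rewrite addrN /= dvdn0 => <-.
Qed.

Lemma dvZ_0 d : (d %| nat_of_ord (0 : 'Z_M)%R)%N.
Proof. by rewrite dvdn0. Qed.

Lemma ZM0 : (M%:R : 'Z_M) = 0.
Proof. exact: pchar_Zp. Qed.

Lemma ZMmul k : ((M * k)%:R : 'Z_M) = 0.
Proof. by rewrite natrM ZM0 mul0r. Qed.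

End ZHelp.

Lemma arith1 e n : (e < n)%N -> (e + (n - e.+1) = n.-1)%N.
Proof. lia. Qed.
Lemma arith2 e n : (e < n)%N -> (n <= e.+1)%N -> (n = e.+1)%N.
Proof. lia. Qed.

Section Main.
Variables (pi pj pk ni nj nk M : nat).
Hypotheses (hpi : prime pi) (hpj : prime pj) (hpk : prime pk)
  (hij : pi != pj) (hik : pi != pk) (hjk : pj != pk)
  (hni : (0 < ni)%N) (hnj : (0 < nj)%N) (hnk : (0 < nk)%N)
  (hM : M = (pi ^ ni * pj ^ nj * pk ^ nk)%N).

Let Nij := (pi ^ ni * pj ^ nj)%N.
Let Mk := (M %/ pk)%N.
Let P := (pk ^ nk)%N.

Lemma pk_gt1 : (1 < pk)%N. Proof. exact: prime_gt1. Qed.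
Lemma pk_gt0 : (0 < pk)%N. Proof. exact: prime_gt0. Qed.

Lemma Nij_gt0 : (0 < Nij)%N.
Proof. by rewrite /Nij muln_gt0 !expn_gt0 !prime_gt0. Qed.

Lemma M_eq : M = (Nij * pk ^ nk.-1 * pk)%N.
Proof.
have e : (pk ^ nk = pk ^ nk.-1 * pk)%N by rewrite -expnSr prednK.
by rewrite hM e /Nij !mulnA.
Qed.

Lemma Mk_eq : Mk = (Nij * pk ^ nk.-1)%N.
Proof. by rewrite /Mk M_eq mulnK // pk_gt0. Qed.

Lemma M_gt1 : (1 < M)%N.
Proof.
rewrite M_eq; apply: (leq_trans pk_gt1); rewrite leq_pmull //.
by rewrite muln_gt0 Nij_gt0 expn_gt0 pk_gt0.
Qed.

Lemma cop_pk_Nij : coprime pk Nij.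
Proof.
rewrite /Nij coprimeMr !coprime_pexpr // !prime_coprime // !dvdn_prime2 //.
by rewrite ![pk == _]eq_sym hik hjk.
Qed.

Lemma P_dvd_M : (P %| M)%N.
Proof. by rewrite hM dvdn_mull. Qed.

Lemma PE : P = (pk ^ nk.-1 * pk)%N.
Proof. by rewrite /P -expnSr prednK. Qed.

Lemma P_sMk s : (P %| s * Mk)%N = (pk %| s)%N.
Proof.
rewrite Mk_eq PE mulnA [(s * Nij * _)%N]mulnC dvdn_pmul2l ?expn_gt0 ?pk_gt0 //.
by rewrite Gauss_dvdl // cop_pk_Nij.
Qed.


Lemma pair_split (X Y : {set 'Z_M}) a a' b b' t : tiling X Y ->
  a \in X -> a' \in X -> b \in Y -> b' \in Y -> ~~ (pk %| t)%N ->
  (a' + b') - (a + b) = (t * Mk)%:R ->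
  (P %| nat_of_ord (a' - a)%R)%N || (P %| nat_of_ord (b' - b)%R)%N.
Proof.
move=> hT ha ha' hb hb' ht hd.
have [//|hA] := boolP (P %| nat_of_ord (a' - a)%R)%N.
have [//|hB] := boolP (P %| nat_of_ord (b' - b)%R)%N.
exfalso.
set al := (a' - a) in hA *; set be := (b' - b) in hB *.
have hsum : al + be = (t * Mk)%:R by rewrite -hd /al /be; ring.
set v := nat_of_ord al in hA.
have v0 : (0 < v)%N by rewrite lt0n; apply: contraNneq hA => ->; rewrite dvdn0.
have [al1 hcop hv] := pfactor_coprime hpk v0.
set e := logn pk v in hv.
have he : (e < nk)%N.
  by rewrite ltnNge; apply: contra hA => hle; rewrite hv dvdn_mull // dvdn_exp2l.
have al10 : (0 < al1)%N.
  by rewrite lt0n; apply: contraTneq v0 => h0; rewrite hv h0.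
have [km kn hkm _] := egcdnP pk al10.
have g1 : gcdn al1 pk = 1%N by apply/eqP; rewrite -/(coprime _ _) coprime_sym.
set w := ((pk - 1) * t * km)%N.
set K' := (Nij * pk ^ (nk - e.+1))%N.
set r := (K' * w).+1.
have Epow : (pk ^ e * pk ^ (nk - e.+1) = pk ^ nk.-1)%N.
  have ee := arith1 _ _ he.
  by rewrite -expnD ee.
have key : (v * (K' * w) + t * Mk = M * (kn * (pk - 1) * t + t))%N.
  rewrite hv Mk_eq M_eq.
  have -> : (al1 * pk ^ e * (K' * w) = Nij * (pk ^ e * pk ^ (nk - e.+1)) * ((km * al1) * (pk - 1) * t))%N.
    by rewrite /K' /w; ring.
  rewrite Epow hkm g1.
  have hu : (pk = (pk - 1) + 1)%N by rewrite subnK // pk_gt0.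
  move: (pk - 1)%N hu => u hu; move: (pk ^ nk.-1)%N => Q0.
  rewrite hu; ring.
have Zkey : al *+ r + be = 0.
  rewrite mulrSr -addrA hsum -[al]natr_Zp -/v -[v%:R *+ _]mulr_natr -natrM -natrD key.
  exact: ZMmul M_gt1 _.
have hK : forall q, prime q -> (q %| K')%N -> ~~ (q %| r)%N.
  move=> q hq hqK; rewrite /r -addn1 dvdn_addr; last exact: dvdn_mulr.
  by rewrite dvdn1; apply/eqP => h1; move: hq; rewrite h1.
have cop : coprime r M.
  rewrite hM !coprimeMr !coprime_pexpr // ![coprime r _]coprime_sym !prime_coprime //.
  apply/andP; split; first (apply/andP; split).
  - apply: hK => //; rewrite /K' /Nij; apply: dvdn_mulr; apply: dvdn_mulr.
    by rewrite -{1}(expn1 pi) dvdn_exp2l.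
  - apply: hK => //; rewrite /K' /Nij; apply: dvdn_mulr; apply: dvdn_mull.
    by rewrite -{1}(expn1 pj) dvdn_exp2l.
  case: (ltnP e.+1 nk) => hlt.
    apply: hK => //; rewrite /K'; apply: dvdn_mull.
    by rewrite -{1}(expn1 pk) dvdn_exp2l // subn_gt0.
  apply/negP => hr.
  have hbe : be = - (al *+ r).
    by apply/eqP; rewrite -addr_eq0 addrC Zkey.
  move: hB; rewrite hbe dvZ_opp ?P_dvd_M ?M_gt1 //.
  rewrite -[al]natr_Zp -/v -[v%:R *+ _]mulr_natr -natrM dvZ_nat ?P_dvd_M ?M_gt1 //.
  have -> : P = (pk ^ e * pk)%N by rewrite -expnSr /P (arith2 _ _ he hlt).
  move/negP; apply.
  have -> : (v * r = pk ^ e * (al1 * r))%N by rewrite hv; ring.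
  by rewrite dvdn_pmul2l ?expn_gt0 ?pk_gt0 // dvdn_mull.
have e2 : a' *+ r + b' = a *+ r + b.
  apply/eqP; rewrite -subr_eq0.
  have -> : a' *+ r + b' - (a *+ r + b) = al *+ r + be by rewrite /al /be; ring.
  by rewrite Zkey.
have ea := @no_unit_shift M M_gt1 X Y r a' a b' b hT cop ha' ha hb' hb e2.
by move: v0; rewrite /v /al ea subrr.
Qed.

Lemma dichot (T : Type) (RA RB : T -> T -> Prop) :
  (forall x y, RA x y \/ RB x y) ->
  (forall x y, RA x y -> RA y x) -> (forall x y, RB x y -> RB y x) ->
  (forall x y z, RA x y -> RA y z -> RA x z) ->
  (forall x y z, RB x y -> RB y z -> RB x z) ->
  (forall x y, RA x y) \/ (forall x y, RB x y).
Proof.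
move=> tot sA sB tA tB.
case: (classic (forall x y, RA x y)) => [h|h]; first by left.
right => x3 x4; apply: NNPP => n34.
have [x1 [x2 n12]] : exists x1 x2, ~ RA x1 x2.
  by apply: NNPP => hh; apply: h => x y; apply: NNPP => hxy; apply: hh; exists x, y.
have b12 : RB x1 x2 by case: (tot x1 x2).
have a34 : RA x3 x4 by case: (tot x3 x4).
case: (tot x1 x3) => [a13|b13].
  case: (tot x2 x3) => [a23|b23]; first by apply: n12; apply: tA a13 (sA _ _ a23).
  have b13 : RB x1 x3 by apply: tB b12 b23.
  have a14 : RA x1 x4 by apply: tA a13 a34.
  case: (tot x2 x4) => [a24|b24]; first by apply: n12; apply: tA a14 (sA _ _ a24).
  by apply: n34; apply: tB (sB _ _ b13) (tB _ _ _ b12 b24).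
case: (tot x1 x4) => [a14|b14]; last by apply: n34; apply: tB (sB _ _ b13) b14.
case: (tot x2 x4) => [a24|b24]; first by apply: n12; apply: tA a14 (sA _ _ a24).
by apply: n34; apply: tB (sB _ _ b13) (tB _ _ _ b12 b24).
Qed.

Definition aof (X Y : {set 'Z_M}) (x : 'Z_M) : 'Z_M :=
  odflt 0 [pick a in X | [exists b in Y, a + b == x]].

Lemma aofP (X Y : {set 'Z_M}) x : tiling X Y ->
  aof X Y x \in X /\ x - aof X Y x \in Y.
Proof.
move=> [ex _]; rewrite /aof; case: pickP => [a|h] /=.
  move=> /andP [ha hex]; have [b /andP [hb /eqP e]] := existsP hex.
  by split => //; rewrite -e addrC addKr.
have [a [b [ha hb e]]] := ex x.
by have := h a; rewrite ha /= => /negbT/existsPn/(_ b); rewrite hb e eqxx.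
Qed.

Lemma aof_uniq (X Y : {set 'Z_M}) a b : tiling X Y -> a \in X -> b \in Y ->
  aof X Y (a + b) = a.
Proof.
move=> hT ha hb; have [h1 h2] := aofP _ _ (a + b) hT.
have [_ un] := hT.
have e : aof X Y (a + b) + (a + b - aof X Y (a + b)) = a + b by rewrite addrC subrK.
by have [] := un _ _ _ _ h1 h2 ha hb e.
Qed.

Lemma tiling_sym (X Y : {set 'Z_M}) : tiling X Y -> tiling Y X.
Proof.
move=> [ex un]; split.
  by move=> x; have [a [b [ha hb e]]] := ex x; exists b, a; rewrite addrC.
move=> b a b' a' hb ha hb' ha' e.
by have [] := un a b a' b' ha hb ha' hb'; rewrite 1?addrC 1?e 1?addrC.
Qed.

Lemma aof_swap (X Y : {set 'Z_M}) x : tiling X Y -> aof Y X x = x - aof X Y x.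
Proof.
move=> hT; have [h1 h2] := aofP _ _ x hT.
have := aof_uniq _ _ _ _ (tiling_sym _ _ hT) h2 h1.
by rewrite subrK.
Qed.

Definition pt (w : 'Z_M) (t : nat) : 'Z_M := w + (t * Mk)%:R.

Definition RA (X Y : {set 'Z_M}) w t t' :=
  (P %| nat_of_ord (aof X Y (pt w t') - aof X Y (pt w t))%R)%N.

Lemma RA_sym X Y w t t' : RA X Y w t t' -> RA X Y w t' t.
Proof. by rewrite /RA -dvZ_opp ?P_dvd_M ?M_gt1 // opprB. Qed.

Lemma RA_trans X Y w t1 t2 t3 : RA X Y w t1 t2 -> RA X Y w t2 t3 -> RA X Y w t1 t3.
Proof.
rewrite /RA => h1 h2.
have -> : aof X Y (pt w t3) - aof X Y (pt w t1) =
  (aof X Y (pt w t2) - aof X Y (pt w t1)) + (aof X Y (pt w t3) - aof X Y (pt w t2)).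
  by ring.
by apply: dvZ_add; rewrite ?P_dvd_M ?M_gt1.
Qed.

Lemma Mk_pk : (Mk * pk)%N = M.
Proof. by rewrite Mk_eq M_eq. Qed.

Lemma natMk_diff t t' : (t <= t')%N ->
  ((t' * Mk)%:R : 'Z_M) - (t * Mk)%:R = ((t' - t) * Mk)%:R.
Proof. by move=> h; rewrite mulnBl natrB // leq_mul2r h orbT. Qed.

Lemma natMk_pk s : (pk %| s)%N -> ((s * Mk)%:R : 'Z_M) = 0.
Proof.
move=> /dvdnP [q ->]; rewrite -mulnA [(pk * Mk)%N]mulnC Mk_pk mulnC.
exact: ZMmul M_gt1 _.
Qed.

Lemma diff_notP t t' : (t < pk)%N -> (t' < pk)%N -> t != t' ->
  ~~ (P %| nat_of_ord (((t * Mk)%:R : 'Z_M) - (t' * Mk)%:R)%R)%N.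
Proof.
have main : forall t t', (t < pk)%N -> (t' < t)%N ->
    ~~ (P %| nat_of_ord (((t * Mk)%:R : 'Z_M) - (t' * Mk)%:R)%R)%N.
  move=> u u' hu h.
  rewrite (natMk_diff _ _ (ltnW h)) dvZ_nat ?P_dvd_M ?M_gt1 // P_sMk.
  apply/negP => /dvdn_leq; rewrite subn_gt0 => /(_ h); rewrite leqNgt.
  by move/negP; apply; apply: leq_ltn_trans (leq_subr _ _) hu.
move=> ht ht' hne; case: (ltngtP t' t) => hc.
- exact: main.
- by rewrite -dvZ_opp ?P_dvd_M ?M_gt1 // opprB main.
- by rewrite hc eqxx in hne.
Qed.

Lemma RA_tot X Y w t t' : tiling X Y -> RA X Y w t t' \/ RA Y X w t t'.
Proof.
move=> hT; wlog h : t t' / (t <= t')%N.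
  move=> hw; case: (leqP t t') => hc; first exact: hw.
  by case: (hw t' t (ltnW hc)) => hh; [left|right]; apply: RA_sym.
have [hd|hd] := boolP (pk %| t' - t)%N.
  have e : pt w t' = pt w t.
    by apply/eqP; rewrite -subr_eq0 /pt opprD addrACA subrr add0r (natMk_diff _ _ h) natMk_pk.
  by left; rewrite /RA e subrr dvdn0.
have [ha hb] := aofP _ _ (pt w t) hT.
have [ha' hb'] := aofP _ _ (pt w t') hT.
have hd' : (aof X Y (pt w t') + (pt w t' - aof X Y (pt w t'))) -
    (aof X Y (pt w t) + (pt w t - aof X Y (pt w t))) = ((t' - t) * Mk)%:R.
  rewrite -(natMk_diff _ _ h) /pt; ring.
have := pair_split _ _ _ _ _ _ _ hT ha ha' hb hb' hd hd'.
rewrite /RA (aof_swap _ _ (pt w t') hT) (aof_swap _ _ (pt w t) hT).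
by case/orP; [left|right].
Qed.

Lemma RA_notboth X Y w t t' : tiling X Y -> (t < pk)%N -> (t' < pk)%N -> t != t' ->
  RA X Y w t t' -> RA Y X w t t' -> False.
Proof.
move=> hT ht ht' hne; rewrite /RA (aof_swap _ _ (pt w t') hT) (aof_swap _ _ (pt w t) hT) => h1 h2.
have := @dvZ_add M M_gt1 _ _ _ P_dvd_M h1 h2.
have -> : aof X Y (pt w t') - aof X Y (pt w t) +
   (pt w t' - aof X Y (pt w t') - (pt w t - aof X Y (pt w t))) =
   ((t' * Mk)%:R : 'Z_M) - (t * Mk)%:R by rewrite /pt; ring.
by apply/negP; apply: diff_notP => //; rewrite eq_sym.
Qed.

Definition typeX (X Y : {set 'Z_M}) w := forall t t', RA X Y w t t'.

Lemma type_dich X Y w : tiling X Y -> typeX X Y w \/ typeX Y X w.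
Proof.
move=> hT; apply: (@dichot nat (RA X Y w) (RA Y X w)).
- by move=> x y; apply: RA_tot.
- exact: RA_sym.
- exact: RA_sym.
- exact: RA_trans.
- exact: RA_trans.
Qed.

Lemma fib_mul p c : (0 < p)%N -> (p %| M)%N -> ((c * (M %/ p))%:R : 'Z_M) \in fib M p.
Proof.
move=> hp hpM; apply/imsetP; exists (Ordinal (ltn_pmod c hp)) => //=.
rewrite {1}(divn_eq c p) mulnDl natrD -mulnA [(p * _)%N]mulnC divnK //.
by rewrite [(_ * M)%N]mulnC ZMmul ?M_gt1 // add0r.
Qed.

Lemma fibE p x : x \in fib M p -> exists2 t, (t < p)%N & x = (t * (M %/ p))%:R.
Proof. by case/imsetP => t _ ->; exists t. Qed.

Lemma on_line X Y w x y : tiling X Y -> x \in X -> y \in Y ->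
  x + y \in shift w (fib M pk) ->
  exists2 t, (t < pk)%N & x = aof X Y (pt w t) /\ x + y = pt w t.
Proof.
move=> hT hx hy /imsetP [f /fibE [t ht ->] e]; exists t => //.
by rewrite /pt -/Mk -e aof_uniq.
Qed.

Lemma typeX_parity X Y w : tiling X Y -> typeX X Y w ->
  splits_parity X Y (shift w (fib M pk)) pk nk.
Proof.
move=> hT hty; split.
  move=> x x' /setIdP [hx /existsP [y /andP [hy hl]]] /setIdP [hx' /existsP [y' /andP [hy' hl']]].
  have [t _ [-> _]] := on_line _ _ _ _ _ hT hx hy hl.
  have [t' _ [-> _]] := on_line _ _ _ _ _ hT hx' hy' hl'.
  exact: hty.
move=> y y' /setIdP [hy /existsP [x /andP [hx hl]]] /setIdP [hy' /existsP [x' /andP [hx' hl']]] hne.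
rewrite addrC in hl; rewrite addrC in hl'.
have [t ht [ex ey]] := on_line _ _ _ _ _ hT hx hy hl.
have [t' ht' [ex' ey']] := on_line _ _ _ _ _ hT hx' hy' hl'.
have hPM := P_dvd_M.
have hQM : (pk ^ nk.-1 %| M)%N by rewrite M_eq dvdn_mulr // dvdn_mull.
have hQP : (pk ^ nk.-1 %| P)%N by rewrite PE dvdn_mulr.
have ediff : y - y' = ((t * Mk)%:R - (t' * Mk)%:R) - (x - x').
  have -> : y = pt w t - x by rewrite -ey addrC addKr.
  have -> : y' = pt w t' - x' by rewrite -ey' addrC addKr.
  by rewrite /pt; ring.
have hxx : (P %| nat_of_ord (x - x')%R)%N by rewrite ex ex'; apply: hty.
have hne' : t != t'.
  apply: contra_neq hne => htt.
  have hxx' : x = x' by rewrite ex ex' htt.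
  by apply: (addrI x); rewrite ey hxx' ey' htt.
have hQs : forall s, (pk ^ nk.-1 %| nat_of_ord ((s * Mk)%:R : 'Z_M))%N.
  by move=> s; rewrite dvZ_nat ?M_gt1 // Mk_eq dvdn_mull // dvdn_mull.
rewrite ediff; split.
  apply: (@dvZ_add M M_gt1 _ _ _ hQM); last first.
    by rewrite (@dvZ_opp M M_gt1 _ _ hQM); exact: dvdn_trans hQP hxx.
  apply: (@dvZ_add M M_gt1 _ _ _ hQM); first exact: hQs.
  by rewrite (@dvZ_opp M M_gt1 _ _ hQM); exact: hQs.
apply/negP => hP.
have hD : (P %| nat_of_ord (((t * Mk)%:R : 'Z_M) - (t' * Mk)%:R)%R)%N.
  have -> : ((t * Mk)%:R : 'Z_M) - (t' * Mk)%:R =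
     (((t * Mk)%:R - (t' * Mk)%:R) - (x - x')) + (x - x') by rewrite subrK.
  exact: (@dvZ_add M M_gt1 _ _ _ hPM hP hxx).
by move: hD; apply/negP; apply: diff_notP.
Qed.

Let Mi := (M %/ pi)%N.
Let Mj := (M %/ pj)%N.
Let D := (M %/ (pi * pj * pk))%N.
Let Dd := (pi ^ ni.-1 * pj ^ nj.-1 * pk ^ nk.-1)%N.

Lemma pexp_split p n : (0 < n)%N -> (p ^ n = p ^ n.-1 * p)%N.
Proof. by move=> hn; rewrite -expnSr prednK. Qed.

Lemma M_Dd : M = (Dd * (pi * pj * pk))%N.
Proof.
rewrite hM (pexp_split pi _ hni) (pexp_split pj _ hnj) (pexp_split pk _ hnk) /Dd; ring.
Qed.

Lemma Mi_eq : Mi = (Dd * (pj * pk))%N.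
Proof.
rewrite /Mi M_Dd.
have -> : (Dd * (pi * pj * pk) = Dd * (pj * pk) * pi)%N by ring.
by rewrite mulnK // prime_gt0.
Qed.

Lemma Mj_eq : Mj = (Dd * (pi * pk))%N.
Proof.
rewrite /Mj M_Dd.
have -> : (Dd * (pi * pj * pk) = Dd * (pi * pk) * pj)%N by ring.
by rewrite mulnK // prime_gt0.
Qed.

Lemma Mk_Dd : Mk = (Dd * (pi * pj))%N.
Proof.
rewrite /Mk M_Dd.
have -> : (Dd * (pi * pj * pk) = Dd * (pi * pj) * pk)%N by ring.
by rewrite mulnK // prime_gt0.
Qed.

Lemma D_eq : D = Dd.
Proof. by rewrite /D M_Dd mulnK // !muln_gt0 !prime_gt0. Qed.

Lemma cop_primes p q : prime p -> prime q -> p != q -> coprime p q.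
Proof. by move=> hp hq hpq; rewrite prime_coprime // dvdn_prime2. Qed.

Lemma gcd_D : gcdn (gcdn Mi Mj) Mk = D.
Proof.
have g0 : gcdn pj pi = 1%N by apply/eqP; apply: cop_primes; rewrite // eq_sym.
have g1 : gcdn (pj * pk) (pi * pk) = pk by rewrite -muln_gcdl g0 mul1n.
have e1 : gcdn (Dd * (pj * pk)) (Dd * (pi * pk)) = (Dd * pk)%N by rewrite -muln_gcdr g1.
have g2 : gcdn pk (pi * pj) = 1%N.
  by apply/eqP; rewrite -/(coprime _ _) coprimeMr !cop_primes // eq_sym.
have e2 : gcdn (Dd * pk) (Dd * (pi * pj)) = Dd by rewrite -muln_gcdr g2 muln1.
by rewrite Mi_eq Mj_eq Mk_Dd D_eq e1 e2.
Qed.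

Lemma negnat k : (((M - 1) * k)%:R : 'Z_M) = - (k%:R).
Proof.
apply/eqP; rewrite -subr_eq0 opprK -natrD -{2}(mul1n k) -mulnDl subnK.
  by rewrite ZMmul ?M_gt1.
by apply: ltnW; apply: M_gt1.
Qed.

Lemma bez m n : (0 < m)%N -> exists x y,
  ((gcdn m n)%:R : 'Z_M) = (x * m + y * n)%:R.
Proof.
move=> hm; have [km kn hk _] := egcdnP n hm.
exists km, ((M - 1) * kn)%N.
rewrite natrD hk natrD -mulnA negnat; ring.
Qed.

Lemma Mi_gt0 : (0 < Mi)%N.
Proof. by rewrite Mi_eq /Dd !muln_gt0 !expn_gt0 !prime_gt0. Qed.

Lemma decomp (z0 z : 'Z_M) : z \in grid z0 D -> exists ci cj ck,
  z = z0 + (ci * Mi)%:R + (cj * Mj)%:R + (ck * Mk)%:R.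
Proof.
rewrite inE => /dvdnP [q hq].
have ez : z = z0 + (((M - 1) * (q * D))%:R) by rewrite negnat -hq natr_Zp opprB addrC subrK.
have [x1 [x2 hb1]] := bez Mi Mj Mi_gt0.
have [y1 [y2 hb2]] := bez (gcdn Mi Mj) Mk (eq_ind_r is_true (introT orP (or_introl Mi_gt0)) (gcdn_gt0 Mi Mj)).
have hD : (D%:R : 'Z_M) = y1%:R * (x1%:R * Mi%:R + x2%:R * Mj%:R) + y2%:R * Mk%:R.
  by rewrite -gcd_D hb2 natrD !natrM hb1 natrD !natrM.
exists ((M - 1) * q * y1 * x1)%N, ((M - 1) * q * y1 * x2)%N, ((M - 1) * q * y2)%N.
rewrite ez !natrM hD; ring.
Qed.

Lemma pof_ok d : (0 < pof pi pj pk d)%N /\ (pof pi pj pk d %| M)%N.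
Proof.
case: d => /=; rewrite ?prime_gt0 //; split => //; rewrite hM.
- by apply: dvdn_mulr; apply: dvdn_mulr; rewrite -{1}(expn1 pi) dvdn_exp2l.
- by apply: dvdn_mulr; apply: dvdn_mull; rewrite -{1}(expn1 pj) dvdn_exp2l.
- by apply: dvdn_mull; rewrite -{1}(expn1 pk) dvdn_exp2l.
Qed.

Lemma fib_add p f1 f2 : (0 < p)%N -> (p %| M)%N -> f1 \in fib M p -> f2 \in fib M p ->
  f1 + f2 \in fib M p.
Proof.
move=> hp hpM /fibE [t1 _ ->] /fibE [t2 _ ->].
by rewrite -natrD -mulnDl fib_mul.
Qed.

Variables (A B : {set 'Z_M}) (hAB : tiling A B) (kappa : 'Z_M -> dir)
  (hkappa_fib : forall a, a \in A ->
      fibered (A :&: grid a (M %/ (pi * pj * pk))) (pof pi pj pk (kappa a)))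
  (z0 : 'Z_M) (lam : 'I_pk -> dir)
  (hlam : forall (nu : 'I_pk) a,
      a \in Sigma A B
              (sumset (shift (z0 + ((nat_of_ord nu) * (M %/ pk))%N%:R) (fib M pi))
                      (fib M pj)) ->
      kappa a = lam nu)
  (hcount : forall l : dir, l != Dk -> (2 <= #|[set nu : 'I_pk | lam nu == l]|)%N).

Lemma fib_closed a p f : a \in A -> fibered (A :&: grid a D) p -> (0 < p)%N -> (p %| M)%N ->
  f \in fib M p -> a + f \in A.
Proof.
move=> ha hF hp hpM hf.
have : a \in A :&: grid a D by rewrite inE ha inE subrr dvdn0.
rewrite {1}hF => /bigcupP [y hy /imsetP [f0 hf0 ea]].
have : y + (f0 + f) \in A :&: grid a D.
  rewrite hF; apply/bigcupP; exists y => //; apply/imsetP; exists (f0 + f) => //.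
  exact: fib_add.
by rewrite addrA -ea inE => /andP [].
Qed.

Definition wp ci cj : 'Z_M := z0 + (ci * Mi)%:R + (cj * Mj)%:R.

Lemma in_plane ci cj (nu : 'I_pk) : pt (wp ci cj) nu \in
  sumset (shift (z0 + ((nat_of_ord nu) * Mk)%N%:R) (fib M pi)) (fib M pj).
Proof.
apply/imset2P; exists (z0 + ((nat_of_ord nu) * Mk)%N%:R + (ci * Mi)%:R) (cj * Mj)%:R.
- apply/imsetP; exists (ci * Mi)%:R => //; apply: fib_mul; rewrite ?prime_gt0 //.
  exact: (proj2 (pof_ok Di)).
- apply: fib_mul; rewrite ?prime_gt0 //; exact: (proj2 (pof_ok Dj)).
by rewrite /pt /wp; ring.
Qed.

Lemma aof_shift d ci cj c (nu : 'I_pk) : lam nu = d ->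
  aof A B (pt (wp ci cj + (c * (M %/ pof pi pj pk d))%:R) nu) =
  aof A B (pt (wp ci cj) nu) + (c * (M %/ pof pi pj pk d))%:R.
Proof.
move=> hl.
set x := pt (wp ci cj) nu.
have [ha hb] := aofP A B x hAB.
set a := aof A B x in ha hb *.
have hS : a \in Sigma A B (sumset (shift (z0 + ((nat_of_ord nu) * (M %/ pk))%N%:R) (fib M pi)) (fib M pj)).
  rewrite inE ha /=; apply/existsP; exists (x - a); rewrite hb /=.
  by rewrite (_ : a + (x - a) = x) ?in_plane // addrC subrK.
have hk : kappa a = d by rewrite (hlam _ _ hS).
have hF := hkappa_fib a ha; rewrite hk in hF.
have [hp hpM] := pof_ok d.
have he : ((c * (M %/ pof pi pj pk d))%:R : 'Z_M) \in fib M (pof pi pj pk d) by apply: fib_mul.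
have ha' := fib_closed a _ _ ha hF hp hpM he.
set e := ((c * (M %/ pof pi pj pk d))%:R : 'Z_M) in he ha' *.
have -> : pt (wp ci cj + e) nu = (a + e) + (x - a) by rewrite /x /pt; ring.
by rewrite aof_uniq.
Qed.

Lemma type_transfer (w e : 'Z_M) (n1 n2 : nat) : (n1 < pk)%N -> (n2 < pk)%N -> n1 != n2 ->
  aof A B (pt (w + e) n1) = aof A B (pt w n1) + e ->
  aof A B (pt (w + e) n2) = aof A B (pt w n2) + e ->
  (typeX A B w -> typeX A B (w + e)) /\ (typeX B A w -> typeX B A (w + e)).
Proof.
move=> hn1 hn2 hne h1 h2.
have eqA : RA A B (w + e) n1 n2 = RA A B w n1 n2.
  rewrite /RA h1 h2; congr (_ %| nat_of_ord _)%N; ring.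
have eqB : RA B A (w + e) n1 n2 = RA B A w n1 n2.
  rewrite /RA (aof_swap _ _ (pt (w + e) n1) hAB) (aof_swap _ _ (pt (w + e) n2) hAB).
  rewrite (aof_swap _ _ (pt w n1) hAB) (aof_swap _ _ (pt w n2) hAB) h1 h2.
  congr (_ %| nat_of_ord _)%N; rewrite /pt; ring.
split => hty.
  case: (type_dich A B (w + e) hAB) => // htB; exfalso.
  have := htB n1 n2; rewrite eqB => hB'.
  exact: (RA_notboth A B w n1 n2 hAB hn1 hn2 hne (hty n1 n2) hB').
case: (type_dich B A (w + e) (tiling_sym _ _ hAB)) => // htA; exfalso.
have := htA n1 n2; rewrite eqA => hA'.
exact: (RA_notboth A B w n1 n2 hAB hn1 hn2 hne hA' (hty n1 n2)).
Qed.

Lemma type_kshift X Y w c : typeX X Y w -> typeX X Y (w + (c * Mk)%:R).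
Proof.
move=> h t t'.
have e : forall s, pt (w + (c * Mk)%:R) s = pt w (c + s).
  by move=> s; rewrite /pt mulnDl natrD addrA.
by rewrite /RA !e; apply: h.
Qed.

Lemma main_sec :
  (forall z, z \in grid z0 (M %/ (pi * pj * pk)) ->
      splits_parity A B (shift z (fib M pk)) pk nk) \/
  (forall z, z \in grid z0 (M %/ (pi * pj * pk)) ->
      splits_parity B A (shift z (fib M pk)) pk nk).
Proof.
case/card_gt1P: (hcount Di isT) => n1 [n2 [hn1 hn2 hne]].
case/card_gt1P: (hcount Dj isT) => m1 [m2 [hm1 hm2 hme]].
rewrite !inE in hn1 hn2 hm1 hm2.
have steps : forall ci cj,
    (typeX A B z0 -> typeX A B (wp ci cj)) /\ (typeX B A z0 -> typeX B A (wp ci cj)).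
  move=> ci cj.
  have e1 : wp ci 0 = wp 0 0 + (ci * (M %/ pof pi pj pk Di))%:R by rewrite /wp !mul0n; ring.
  have e2 : wp ci cj = wp ci 0 + (cj * (M %/ pof pi pj pk Dj))%:R by rewrite /wp !mul0n; ring.
  have e0 : wp 0 0 = z0 by rewrite /wp !mul0n; ring.
  have [t1A t1B] := type_transfer (wp 0 0) (ci * (M %/ pof pi pj pk Di))%:R n1 n2 (ltn_ord n1) (ltn_ord n2) hne
     (aof_shift Di 0 0 ci n1 (eqP hn1)) (aof_shift Di 0 0 ci n2 (eqP hn2)).
  have [t2A t2B] := type_transfer (wp ci 0) (cj * (M %/ pof pi pj pk Dj))%:R m1 m2 (ltn_ord m1) (ltn_ord m2) hme
     (aof_shift Dj ci 0 cj m1 (eqP hm1)) (aof_shift Dj ci 0 cj m2 (eqP hm2)).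
  rewrite -e1 e0 in t1A t1B; rewrite -e2 in t2A t2B.
  split => h; [apply: t2A; apply: t1A | apply: t2B; apply: t1B] => //.
case: (type_dich A B z0 hAB) => hty; [left|right] => z hz;
  have [ci [cj [ck ez]]] := decomp z0 z hz; rewrite ez.
  apply: typeX_parity => //; apply: type_kshift; exact: (proj1 (steps ci cj) hty).
apply: typeX_parity; first exact: tiling_sym.
apply: type_kshift; exact: (proj2 (steps ci cj) hty).
Qed.

End Main.

Theorem lemma7p6
  (pi pj pk ni nj nk M : nat)
  (hpi : prime pi) (hpj : prime pj) (hpk : prime pk)
  (hij : pi != pj) (hik : pi != pk) (hjk : pj != pk)
  (hni : (0 < ni)%N) (hnj : (0 < nj)%N) (hnk : (0 < nk)%N)
  (hM : M = (pi ^ ni * pj ^ nj * pk ^ nk)%N)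
  (A B : {set 'Z_M})
  (hAB : tiling A B)
  (hPhi : 'Phi_M %| maskpoly A)
  (hfib : forall a, a \in A -> exists nu : dir,
      fibered (A :&: grid a (M %/ (pi * pj * pk))) (pof pi pj pk nu))
  (kappa : 'Z_M -> dir)
  (hkappa_grid : forall a a', a \in A -> a' \in A ->
      a' \in grid a (M %/ (pi * pj * pk)) -> kappa a = kappa a')
  (hkappa_fib : forall a, a \in A ->
      fibered (A :&: grid a (M %/ (pi * pj * pk))) (pof pi pj pk (kappa a)))
  (z0 : 'Z_M)
  (hkLam : forall a, a \in Sigma A B (grid z0 (M %/ (pi * pj * pk))) -> kappa a != Dk)
  (lam : 'I_pk -> dir)
  (hlam_ij : forall nu, lam nu != Dk)
  (hlam : forall (nu : 'I_pk) a,
      a \in Sigma A B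
              (sumset (shift (z0 + ((nat_of_ord nu) * (M %/ pk))%N%:R) (fib M pi))
                      (fib M pj)) ->
      kappa a = lam nu)
  (hcount : forall l : dir, l != Dk -> (2 <= #|[set nu : 'I_pk | lam nu == l]|)%N) :
  (forall z, z \in grid z0 (M %/ (pi * pj * pk)) ->
      splits_parity A B (shift z (fib M pk)) pk nk) \/
  (forall z, z \in grid z0 (M %/ (pi * pj * pk)) ->
      splits_parity B A (shift z (fib M pk)) pk nk).
Proof.
exact: (@main_sec pi pj pk ni nj nk M hpi hpj hpk hij hik hjk hni hnj hnk hM
  A B hAB kappa hkappa_fib z0 lam hlam hcount).
Qed.
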